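(* Let $K\subseteq L\subseteq \mathfrak U\subseteq\mathcal A$ be differential fields of characteristic $0$, where $\mathcal A$ is a saturated differentially closed field with $|\mathfrak U|<|\mathcal A|$, and suppose $L/K$ is a strongly normal extension. Then there is an embedding of the group $gal(L/K)$ into the group $Gal(L/K)$. Moreover, every $\sigma\in Hom_K(L,\mathfrak U)$ extends uniquely to an element of $Gal(L/K)$, and this extension restricts to an element of $Gal_{\mathfrak U}(L/K)$.
   Context: For a differential field $F$, $C_F$ is its field of constants. $\langle A,B\rangle$ denotes the differential field generated by $A\cup B$ inside $\mathcal A$. $Hom_K(L,M)$ is the set of differential field embeddings of $L$ into $M$ that fix $K$ pointwise. An element $\tau\in Hom_K(L,\mathcal A)$ is strong if $\tau$ is the identity on $C_L$ and $\langle L,C_{\mathcal A}\rangle=\langle\tau(L),C_{\mathcal A}\rangle$. $L/K$ is strongly normal if $L$ is finitely generated as a differential field over $K$ and every $\tau\in Hom_K(L,\mathcal A)$ is strong. $gal(L/K)$ is the group of differential field automorphisms of $L$ fixing $K$; $Gal(L/K)$ is the group of differential field automorphisms of $\langle L,C_{\mathcal A}\rangle$ fixing $\langle K,C_{\mathcal A}\rangle$ pointwise; $Gal_{\mathfrak U}(L/K)$ is the group of differential field automorphisms of $\langle L,C_{\mathfrak U}\rangle$ fixing $\langle K,C_{\mathfrak U}\rangle$ pointwise. *)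

(* Defs.v *)
From Stdlib Require Import List.
From HB Require Import structures.
From mathcomp Require Import all_boot all_order all_algebra.
From mathcomp Require Import mpoly.
Set Implicit Arguments. Unset Strict Implicit. Unset Printing Implicit Defensive.
Import GRing.Theory.
Local Open Scope ring_scope.

(* A differential field is a field A together with a derivation D.
   Differential subfields of the ambient field are predicates on A. *)
Section Diff.
Variables (A : fieldType) (D : A -> A).

Definition derivation : Prop :=
  (forall x y, D (x + y) = D x + D y) /\ (forall x y, D (x * y) = D x * y + x * D y).

Definition char0 : Prop := forall n : nat, (n.+1)%:R != 0 :> A.

Definition dsubfield (F : A -> Prop) : Prop :=
  F 0 /\ F 1 /\ (forall x y, F x -> F y -> F (x - y)) /\
  (forall x y, F x -> F y -> F (x * y)) /\
  (forall x, F x -> F x^-1) /\ (forall x, F x -> F (D x)).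

Definition subset_of (E F : A -> Prop) : Prop := forall x, E x -> F x.

Definition consts (F : A -> Prop) : A -> Prop := fun x => F x /\ D x = 0.

Definition gen (E F : A -> Prop) : A -> Prop :=
  fun x => forall G, dsubfield G -> subset_of E G -> subset_of F G -> G x.

Definition image (f : A -> A) (E : A -> Prop) : A -> Prop :=
  fun y => exists2 x, E x & f x = y.

Definition dhom (K L M : A -> Prop) (f : A -> A) : Prop :=
  (forall x y, L x -> L y -> f (x + y) = f x + f y) /\
  (forall x y, L x -> L y -> f (x * y) = f x * f y) /\
  f 1 = 1 /\
  (forall x, L x -> f (D x) = D (f x)) /\
  (forall x y, L x -> L y -> f x = f y -> x = y) /\
  (forall x, L x -> M (f x)) /\
  (forall x, K x -> f x = x).

Definition dauto (F E : A -> Prop) (f : A -> A) : Prop :=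
  dhom F E E f /\ (forall y, E y -> exists2 x, E x & f x = y).

Definition allA : A -> Prop := fun _ => True.

Definition CA : A -> Prop := consts allA.

Definition strong (L : A -> Prop) (f : A -> A) : Prop :=
  (forall x, consts L x -> f x = x) /\
  (forall x, gen L CA x <-> gen (image f L) CA x).

Definition strongly_normal (K L : A -> Prop) : Prop :=
  (exists s : seq A, forall x, L x <-> gen K (fun y => y \in s) x) /\
  (forall f, dhom K L allA f -> strong L f).

(* gal(L/K), Gal(L/K), Gal_U(L/K), as predicates on maps A -> A
   (only the restriction to the relevant domain matters) *)
Definition gal_small (K L : A -> Prop) := dauto K L.
Definition Gal (K L : A -> Prop) := dauto (gen K CA) (gen L CA).
Definition GalU (U K L : A -> Prop) := dauto (gen K (consts U)) (gen L (consts U)).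

(* a differential polynomial of order <= n in one variable X, in the
   variables X, DX, ..., D^n X *)
Definition deval (n : nat) (p : {mpoly A[n.+1]}) (a : A) : A :=
  p.@[fun i : 'I_n.+1 => iter i D a].

Definition involves (n : nat) (p : {mpoly A[n.+1]}) (i : 'I_n.+1) : Prop :=
  exists2 m, m \in msupp p & (0 < m i)%N.

(* ord g < ord f, with the convention that the order of a polynomial
   involving no variable is -1 *)
Definition ord_lt (n : nat) (g f : {mpoly A[n.+1]}) : Prop :=
  exists2 j, involves f j & forall i, involves g i -> (i < j)%N.

Definition diff_closed : Prop :=
  forall (n : nat) (f g : {mpoly A[n.+1]}), g != 0 -> ord_lt g f ->
    exists a, deval f a = 0 /\ deval g a != 0.

End Diff.

Inductive dterm (A : Type) :=
| DVar of nat
| DConst of A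
| DAdd of dterm A & dterm A
| DOpp of dterm A
| DMul of dterm A & dterm A
| DDer of dterm A.

Inductive dform (A : Type) :=
| DEq of dterm A & dterm A
| DNot of dform A
| DAnd of dform A & dform A
| DEx of nat & dform A.

Section Sem.
Variables (A : fieldType) (D : A -> A).

Fixpoint teval (e : nat -> A) (t : dterm A) : A :=
  match t with
  | DVar i => e i
  | DConst c => c
  | DAdd t1 t2 => teval e t1 + teval e t2
  | DOpp t1 => - teval e t1
  | DMul t1 t2 => teval e t1 * teval e t2
  | DDer t1 => D (teval e t1)
  end.

Definition upd (e : nat -> A) (i : nat) (a : A) : nat -> A :=
  fun j => if j == i then a else e j.

Fixpoint holds (e : nat -> A) (f : dform A) : Prop :=
  match f with
  | DEq t1 t2 => teval e t1 = teval e t2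
  | DNot f1 => ~ holds e f1
  | DAnd f1 f2 => holds e f1 /\ holds e f2
  | DEx i f1 => exists a, holds (upd e i a) f1
  end.

Fixpoint tparams (B : A -> Prop) (t : dterm A) : Prop :=
  match t with
  | DVar _ => True
  | DConst c => B c
  | DAdd t1 t2 | DMul t1 t2 => tparams B t1 /\ tparams B t2
  | DOpp t1 | DDer t1 => tparams B t1
  end.

Fixpoint params (B : A -> Prop) (f : dform A) : Prop :=
  match f with
  | DEq t1 t2 => tparams B t1 /\ tparams B t2
  | DNot f1 => params B f1
  | DAnd f1 f2 => params B f1 /\ params B f2
  | DEx _ f1 => params B f1
  end.

(* a formula in one free variable x: all free variables are read as x *)
Definition sat1 (a : A) (f : dform A) : Prop := holds (fun _ => a) f.

Definition smaller_than_A (B : A -> Prop) : Prop :=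
  ~ exists h : A -> {x : A | B x}, injective h.

Definition saturated : Prop :=
  forall (B : A -> Prop), smaller_than_A B ->
  forall (P : dform A -> Prop), (forall f, P f -> params B f) ->
  (forall l : seq (dform A), (forall f, In f l -> P f) ->
      exists a, forall f, In f l -> sat1 a f) ->
  exists a, forall f, P f -> sat1 a f.

End Sem.

(* Main.v *)
Require Import Defs.
From HB Require Import structures.
From mathcomp Require Import all_boot all_order all_algebra.
From mathcomp Require Import ring.
From Stdlib Require Import Classical ClassicalEpsilon.
Set Implicit Arguments. Unset Strict Implicit. Unset Printing Implicit Defensive.
Import GRing.Theory.

Section Main.
Local Open Scope ring_scope.
Variables (A : fieldType) (D : A -> A).
Hypothesis hD : derivation D.

Lemma DD x y : D (x + y) = D x + D y. Proof. exact: hD.1. Qed.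
Lemma DM x y : D (x * y) = D x * y + x * D y. Proof. exact: hD.2. Qed.
Lemma D0 : D 0 = 0.
Proof. have h := DD 0 0; rewrite addr0 in h.
by move/(congr1 (fun z => z - D 0)): h; rewrite subrr addrK => <-. Qed.
Lemma D1 : D 1 = 0.
Proof. have h := DM 1 1; rewrite !mulr1 !mul1r in h.
by move/(congr1 (fun z => z - D 1)): h; rewrite subrr addrK => <-. Qed.
Lemma DN x : D (- x) = - D x.
Proof. apply: (addrI (D x)); by rewrite -DD !subrr D0. Qed.
Lemma DB x y : D (x - y) = D x - D y.
Proof. by rewrite DD DN. Qed.
Lemma DV x : x != 0 -> D (x^-1) = - D x / (x * x).
Proof. move=> nx. have h := DM x x^-1. rewrite mulfV // D1 in h.
have e : D x^-1 = x^-1 * (x * D x^-1) by rewrite mulrA mulVf // mul1r.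
rewrite e. have -> : x * D x^-1 = - (D x * x^-1).
  by apply: (addrI (D x * x^-1)); rewrite -h subrr.
by field.
Qed.
Lemma DDiv x y : y != 0 -> D (x / y) = (D x * y - x * D y) / (y * y).
Proof. move=> ny; rewrite DM DV //; by field. Qed.

Lemma Dsum (T : eqType) (s : seq T) (f g : T -> A) :
  (forall t, t \in s -> D (g t) = 0) ->
  D (\sum_(t <- s) f t * g t) = \sum_(t <- s) D (f t) * g t.
Proof.
elim: s => [|t s IH] h; first by rewrite !big_nil D0.
rewrite !big_cons DD DM h ?mem_head // mulr0 addr0 IH //.
by move=> u us; apply: h; rewrite in_cons us orbT.
Qed.

Lemma sum_rem (T : eqType) (s : seq T) (x : T) (F : T -> A) :
  x \in s -> \sum_(y <- s) F y = F x + \sum_(y <- rem x s) F y.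
Proof. by move=> xs; rewrite (perm_big _ (perm_to_rem xs)) big_cons. Qed.

Lemma comb (T : Type) (r : seq (T * A)) (f g : T -> A) k :
  \sum_(y <- r) (f y.1 + k * g y.1) * y.2 =
  \sum_(y <- r) f y.1 * y.2 + k * \sum_(y <- r) g y.1 * y.2.
Proof.
rewrite mulr_sumr -big_split /=; apply: eq_bigr => y _; ring.
Qed.

Lemma solve (T : Type) (r : seq (T * A)) (F : T -> A) e x2 :
  e != 0 -> e * x2 + \sum_(y <- r) F y.1 * y.2 = 0 ->
  x2 = \sum_(y <- r) (- F y.1 / e) * y.2.
Proof.
move=> ne h.
have -> : \sum_(y <- r) (- F y.1 / e) * y.2 = - (\sum_(y <- r) F y.1 * y.2) / e.
  rewrite -sumrN mulr_suml; apply: eq_bigr => y _; ring.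
have -> : \sum_(y <- r) F y.1 * y.2 = - (e * x2).
  by apply: (addrI (e * x2)); rewrite h subrr.
by field.
Qed.


Section Hom.
Variables (L : A -> Prop) (sg : A -> A).
Hypothesis HL : dsubfield D L.
Hypothesis sadd : forall x y, L x -> L y -> sg (x + y) = sg x + sg y.
Hypothesis smul : forall x y, L x -> L y -> sg (x * y) = sg x * sg y.
Hypothesis s1 : sg 1 = 1.
Hypothesis sD : forall x, L x -> sg (D x) = D (sg x).
Hypothesis sinj : forall x y, L x -> L y -> sg x = sg y -> x = y.
Hypothesis sfix : forall x, L x -> D x = 0 -> sg x = x.

Lemma L0 : L 0. Proof. by case: HL. Qed.
Lemma L1 : L 1. Proof. by case: HL => _ []. Qed.
Lemma LB x y : L x -> L y -> L (x - y). Proof. by case: HL => _ [_ [h _]]; apply: h. Qed.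
Lemma LM x y : L x -> L y -> L (x * y). Proof. by case: HL => _ [_ [_ [h _]]]; apply: h. Qed.
Lemma LV x : L x -> L x^-1. Proof. by case: HL => _ [_ [_ [_ [h _]]]]; apply: h. Qed.
Lemma LD x : L x -> L (D x). Proof. by case: HL => _ [_ [_ [_ [_ h]]]]; apply: h. Qed.
Lemma LN x : L x -> L (- x). Proof. by move=> h; rewrite -sub0r; apply: LB => //; apply: L0. Qed.
Lemma LA x y : L x -> L y -> L (x + y).
Proof. by move=> hx hy; rewrite -[y]opprK; apply: LB => //; apply: LN. Qed.
Lemma LDiv x y : L x -> L y -> L (x / y). Proof. by move=> hx hy; apply: LM => //; apply: LV. Qed.

Lemma sg0 : sg 0 = 0.
Proof. have h := sadd L0 L0; rewrite addr0 in h.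
by move/(congr1 (fun z => z - sg 0)): h; rewrite subrr addrK => <-. Qed.
Lemma sgN x : L x -> sg (- x) = - sg x.
Proof. move=> hx; apply: (addrI (sg x)); by rewrite -(sadd hx (LN hx)) !subrr sg0. Qed.
Lemma sgB x y : L x -> L y -> sg (x - y) = sg x - sg y.
Proof. by move=> hx hy; rewrite (sadd hx (LN hy)) sgN. Qed.
Lemma sg_neq0 x : L x -> x != 0 -> sg x != 0.
Proof. move=> hx nx; apply/eqP => h; move/eqP: nx; apply; apply: sinj => //; first exact: L0.
by rewrite sg0. Qed.
Lemma sgV x : L x -> sg (x^-1) = (sg x)^-1.
Proof.
move=> hx; case: (eqVneq x 0) => [->|nx]; first by rewrite invr0 sg0 invr0.
have h : sg x * sg x^-1 = 1 by rewrite -(smul hx (LV hx)) mulfV.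
have nz := sg_neq0 hx nx.
by rewrite -[sg x^-1]mul1r -(mulVf nz) -mulrA h mulr1.
Qed.
Lemma sgDiv x y : L x -> L y -> sg (x / y) = sg x / sg y.
Proof. by move=> hx hy; rewrite (smul hx (LV hy)) sgV. Qed.

Lemma Etrans n : forall (T : eqType) (s : seq (T * A)) (a : T -> A) (c0 : A),
  size s = n -> (forall y, y \in s -> L (a y.1) /\ D y.2 = 0) -> D c0 = 0 ->
  (\sum_(y <- s) a y.1 * y.2 = c0 <-> \sum_(y <- s) sg (a y.1) * y.2 = c0).
Proof.
elim: n => [|n IH] T s a c0.
  by case: s => // _ _ _; rewrite !big_nil.
move=> hs hy hc0.
case: (classic (exists2 y, y \in s & D (a y.1) != 0)) => [[x xs dx]|nex]; last first.
  have -> : \sum_(y <- s) sg (a y.1) * y.2 = \sum_(y <- s) a y.1 * y.2 => //.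
  apply: eq_big_seq => y ys; rewrite sfix //; first exact: (hy y ys).1.
  case: (eqVneq (D (a y.1)) 0) => // hn; exfalso; apply: nex; by exists y.
set r := rem x s.
have sr : size r = n by rewrite size_rem // hs.
have hr : forall y, y \in r -> L (a y.1) /\ D y.2 = 0 by move=> y /mem_rem; apply: hy.
have [Lx cx] := hy x xs.
pose b t := - D (a t) / D (a x.1).
pose a' t := a t + a x.1 * b t.
have Lb : forall y, y \in r -> L (b y.1) /\ D y.2 = 0.
  move=> y yr; have [h1 h2] := hr y yr; split => //.
  by apply: LDiv; [apply: LN; apply: LD | apply: LD].
have La' : forall y, y \in r -> L (a' y.1) /\ D y.2 = 0.
  move=> y yr; have [h1 h2] := hr y yr; have [h3 _] := Lb y yr; split => //.
  by apply: LA => //; apply: LM.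
have sb : forall y, y \in r -> sg (b y.1) = - sg (D (a y.1)) / sg (D (a x.1)).
  move=> y yr; have [h1 _] := hr y yr.
  have LDy := LD h1; have LDx := LD Lx.
  by rewrite /b (sgDiv (LN LDy) LDx) (sgN LDy).
have sa' : forall y, y \in r -> sg (a' y.1) = sg (a y.1) + sg (a x.1) * sg (b y.1).
  move=> y yr; have [h1 _] := hr y yr; have [h3 _] := Lb y yr.
  by rewrite /a' (sadd h1 (LM Lx h3)) (smul Lx h3).
have cs : forall y, y \in s -> D y.2 = 0 by move=> y ys; exact: (hy y ys).2.
split => H.
- have hx2 : x.2 = \sum_(y <- r) b y.1 * y.2.
    apply: (@solve _ r (fun t => D (a t)) _ _ dx).
    have := Dsum (fun y => a y.1) cs; rewrite H hc0 (sum_rem _ xs) /= => <-.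
    by [].
  have hsx2 : \sum_(y <- r) sg (b y.1) * y.2 = x.2 by apply/(IH _ r b x.2 sr Lb cx); rewrite -hx2.
  have hc : \sum_(y <- r) a' y.1 * y.2 = c0.
    by rewrite comb -hx2 -H (sum_rem _ xs) addrC.
  have := (IH _ r a' c0 sr La' hc0).1 hc.
  rewrite (eq_big_seq (fun y => (sg (a y.1) + sg (a x.1) * sg (b y.1)) * y.2)); last first.
    by move=> y yr; rewrite sa'.
  rewrite (comb r (fun t => sg (a t)) (fun t => sg (b t))) hsx2 => <-.
  by rewrite (sum_rem _ xs) addrC.
- have sdx : sg (D (a x.1)) != 0 by apply: sg_neq0 => //; apply: LD.
  have hx2 : x.2 = \sum_(y <- r) sg (b y.1) * y.2.
    rewrite (eq_big_seq (fun y => (- sg (D (a y.1)) / sg (D (a x.1))) * y.2)); last first.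
      by move=> y yr; rewrite sb.
    apply: (@solve _ r (fun t => sg (D (a t))) _ _ sdx).
    have e : \sum_(y <- r) sg (D (a y.1)) * y.2 = \sum_(y <- r) D (sg (a y.1)) * y.2.
      apply: eq_big_seq => y yr; rewrite sD //; exact: (hr y yr).1.
    have := Dsum (fun y => sg (a y.1)) cs; rewrite H hc0 (sum_rem _ xs) /= -(sD Lx) -e => <-.
    by [].
  have hsx2 : \sum_(y <- r) b y.1 * y.2 = x.2 by apply/(IH _ r b x.2 sr Lb cx); rewrite -hx2.
  have hc : \sum_(y <- r) sg (a' y.1) * y.2 = c0.
    rewrite (eq_big_seq (fun y => (sg (a y.1) + sg (a x.1) * sg (b y.1)) * y.2)); last first.
      by move=> y yr; rewrite sa'.
    by rewrite (comb r (fun t => sg (a t)) (fun t => sg (b t))) -hx2 -H (sum_rem _ xs) addrC.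
  have := (IH _ r a' c0 sr La' hc0).2 hc.
  rewrite comb hsx2 => <-.
  by rewrite (sum_rem _ xs) addrC.
Qed.

End Hom.

Lemma tags_sub (T : eqType) (s1 s2 : seq (T * A)) y :
  perm_eq (map fst s1) (map fst s2) -> y \in s1 -> exists2 z, z \in s2 & z.1 = y.1.
Proof.
move=> p ys; have : y.1 \in map fst s2 by rewrite -(perm_mem p); apply: map_f.
by case/mapP => z zs ->; exists z.
Qed.

Lemma sum_in (M : A -> Prop) (HM : dsubfield D M) (T : eqType) (s : seq T) (F : T -> A) :
  (forall y, y \in s -> M (F y)) -> M (\sum_(y <- s) F y).
Proof.
move=> h; rewrite big_seq; apply: big_ind; [exact: L0 | move=> *; exact: LA |].
by move=> y ys; apply: h.
Qed.

Section Spec.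
Variable U : A -> Prop.
Hypothesis HU : dsubfield D U.

Lemma spec n : forall (T : eqType) (s : seq (T * A)) (w v : T -> A),
  size s = n -> (forall y, y \in s -> U (w y.1) /\ D y.2 = 0) ->
  \sum_(y <- s) w y.1 * y.2 = 0 -> \sum_(y <- s) v y.1 * y.2 != 0 ->
  exists s' : seq (T * A), [/\ perm_eq (map fst s') (map fst s),
     (forall y, y \in s' -> U y.2 /\ D y.2 = 0),
     \sum_(y <- s') w y.1 * y.2 = 0 & \sum_(y <- s') v y.1 * y.2 != 0].
Proof.
elim: n => [|n IH] T s w v.
  by case: s => // _ _ _; rewrite big_nil eqxx.
move=> hs hy hw hv.
case: (classic (exists2 y, y \in s & w y.1 != 0)) => [[x xs wx]|nex].
- set r := rem x s.
  have sr : size r = n by rewrite size_rem // hs.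
  have hr : forall y, y \in r -> U (w y.1) /\ D y.2 = 0 by move=> y /mem_rem; apply: hy.
  have [Ux cx] := hy x xs.
  pose m t := w t / w x.1.
  pose w' t := D (m t).
  pose v' t := v t + (- v x.1) * m t.
  have hx2 : x.2 = \sum_(y <- r) (- w y.1 / w x.1) * y.2.
    apply: (@solve _ r w _ _ wx); by rewrite -(sum_rem _ xs).
  have cs : forall y, y \in s -> D y.2 = 0 by move=> y ys; exact: (hy y ys).2.
  have hms : \sum_(y <- s) m y.1 * y.2 = 0.
    rewrite /m; have -> : \sum_(y <- s) w y.1 / w x.1 * y.2 = (\sum_(y <- s) w y.1 * y.2) / w x.1.
      rewrite mulr_suml; apply: eq_bigr => y _; ring.
    by rewrite hw mul0r.
  have hw' : \sum_(y <- r) w' y.1 * y.2 = 0.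
    have := Dsum (fun y => m y.1) cs; rewrite hms D0 (sum_rem _ xs) /=.
    by rewrite /m mulfV // D1 mul0r add0r => <-.
  have hv' : \sum_(y <- r) v' y.1 * y.2 != 0.
    rewrite /v' comb.
    have -> : \sum_(y <- r) m y.1 * y.2 = - x.2.
      rewrite hx2 -sumrN; apply: eq_bigr => y _; rewrite /m; ring.
    by move: hv; rewrite (sum_rem _ xs) /= mulrN mulNr opprK addrC.
  have hr' : forall y, y \in r -> U (w' y.1) /\ D y.2 = 0.
    move=> y yr; have [h1 h2] := hr y yr; split => //.
    by apply: LD => //; apply: LDiv.
  have [s'' [p'' m'' sw'' sv'']] := IH _ r w' v' sr hr' hw' hv'.
  have Us'' : forall y, y \in s'' -> U (m y.1).
    move=> y ys; have [z zr <-] := tags_sub p'' ys.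
    by apply: LDiv => //; exact: (hr z zr).1.
  set t0 := \sum_(y <- s'') m y.1 * y.2.
  have Ut0 : U t0.
    apply: sum_in => // y ys; apply: LM => //; [exact: Us'' | exact: (m'' y ys).1].
  have Dt0 : D t0 = 0.
    rewrite /t0 Dsum; first exact: sw''.
    by move=> y ys; exact: (m'' y ys).2.
  have ewt : \sum_(y <- s'') w y.1 * y.2 = w x.1 * t0.
    rewrite /t0 mulr_sumr; apply: eq_bigr => y _; rewrite /m; field.
    exact: wx.
  exists ((x.1, - t0) :: s''); split.
  + rewrite /= perm_sym; apply: (perm_trans (perm_map fst (perm_to_rem xs))).
    by rewrite /= perm_cons perm_sym.
  + move=> y; rewrite in_cons => /orP [/eqP -> | ys]; last exact: m'' y ys.
    by split; [apply: LN | rewrite DN Dt0 oppr0].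
  + by rewrite big_cons /= ewt mulrN addNr.
  + rewrite big_cons /=.
    move: sv''; rewrite /v' comb -/t0.
    by rewrite mulrN mulNr addrC.
- have [x xs hx] : exists2 y, y \in s & v y.1 * y.2 != 0.
    apply: NNPP => h; move/eqP: hv; apply; apply: big1_seq => y /andP [_ ys].
    by apply/eqP; apply: NNPP => hn; apply: h; exists y => //; apply/negP.
  have w0 : forall y, y \in s -> w y.1 = 0.
    move=> y ys; apply/eqP; apply: NNPP => hn; apply: nex; exists y => //; exact/negP.
  exists ((x.1, 1) :: map (fun y => (y.1, 0)) (rem x s)); split.
  + have e : map fst (map (fun y : T * A => (y.1, 0 : A)) (rem x s)) = map fst (rem x s).
      by elim: (rem x s) => //= y r0 ->.
    rewrite /= e perm_sym.
    exact: (perm_map fst (perm_to_rem xs)).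
  + move=> y; rewrite in_cons => /orP [/eqP -> | /mapP [z _ ->]] /=.
      by split; [apply: L1 | apply: D1].
    by split; [apply: L0 | apply: D0].
  + rewrite big_cons big_map /= w0 // mul0r add0r; apply: big1 => y _; exact: mulr0.
  + rewrite big_cons big_map /= big1 ?addr0 ?mulr1; last by move=> y _; rewrite mulr0.
    by move: hx; apply: contraNneq => ->; rewrite mul0r.
Qed.

End Spec.

Lemma sum2M (T1 T2 : Type) (r1 : seq T1) (r2 : seq T2) (F : T1 -> A) (G : T2 -> A) :
  \sum_(y1 <- r1) \sum_(y2 <- r2) F y1 * G y2 = (\sum_(y1 <- r1) F y1) * (\sum_(y2 <- r2) G y2).
Proof. rewrite mulr_suml; apply: eq_bigr => y1 _; by rewrite mulr_sumr. Qed.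

Lemma sum2D (T1 T2 : Type) (r1 : seq T1) (r2 : seq T2) (F G : T1 -> T2 -> A) :
  \sum_(y1 <- r1) \sum_(y2 <- r2) (F y1 y2 + G y1 y2) =
  \sum_(y1 <- r1) \sum_(y2 <- r2) F y1 y2 + \sum_(y1 <- r1) \sum_(y2 <- r2) G y1 y2.
Proof. rewrite -big_split; apply: eq_bigr => y1 _; by rewrite big_split. Qed.

Lemma sum2B (T1 T2 : Type) (r1 : seq T1) (r2 : seq T2) (F G : T1 -> T2 -> A) :
  \sum_(y1 <- r1) \sum_(y2 <- r2) (F y1 y2 - G y1 y2) =
  \sum_(y1 <- r1) \sum_(y2 <- r2) F y1 y2 - \sum_(y1 <- r1) \sum_(y2 <- r2) G y1 y2.
Proof. rewrite -sumrB; apply: eq_bigr => y1 _; by rewrite sumrB. Qed.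

Definition Pg (g : A -> A) (s : seq (A * A * A)) := \sum_(y <- s) g y.1.1 * y.2.
Definition Qg (g : A -> A) (s : seq (A * A * A)) := \sum_(y <- s) g y.1.2 * y.2.
Definition hv g s := Pg g s / Qg g s.
Definition okl (M Cs : A -> Prop) (s : seq (A * A * A)) :=
  forall y, y \in s -> [/\ M y.1.1, M y.1.2 & Cs y.2].
Definition rep (M Cs : A -> Prop) x :=
  exists s, [/\ okl M Cs s, Qg id s != 0 & x = hv id s].

Definition addl (s1 s2 : seq (A * A * A)) :=
  [seq ((y1.1.1 * y2.1.2 + y2.1.1 * y1.1.2, y1.1.2 * y2.1.2), y1.2 * y2.2) | y1 <- s1, y2 <- s2].
Definition oppl (s : seq (A * A * A)) := [seq ((- y.1.1, y.1.2), y.2) | y <- s].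
Definition mull (s1 s2 : seq (A * A * A)) :=
  [seq ((y1.1.1 * y2.1.1, y1.1.2 * y2.1.2), y1.2 * y2.2) | y1 <- s1, y2 <- s2].
Definition Dl (s : seq (A * A * A)) :=
  [seq ((D y1.1.1 * y2.1.2 - y1.1.1 * D y2.1.2, y1.1.2 * y2.1.2), y1.2 * y2.2) | y1 <- s, y2 <- s].
Definition invl (s : seq (A * A * A)) := [seq ((y.1.2, y.1.1), y.2) | y <- s].
Definition zl (s : seq (A * A * A)) := [seq ((0 : A, y.1.2), y.2) | y <- s].

Section HomG.
Variables (M Cs : A -> Prop) (g : A -> A).
Hypothesis HM : dsubfield D M.
Hypothesis gadd : forall x y, M x -> M y -> g (x + y) = g x + g y.
Hypothesis gmul : forall x y, M x -> M y -> g (x * y) = g x * g y.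
Hypothesis Csmul : forall x y, Cs x -> Cs y -> Cs (x * y).

Lemma okl_addl s1 s2 : okl M Cs s1 -> okl M Cs s2 -> okl M Cs (addl s1 s2).
Proof.
move=> h1 h2 y /allpairsP [[y1 y2] [/= y1s y2s ->]] /=.
have [a1 b1 c1] := h1 y1 y1s; have [a2 b2 c2] := h2 y2 y2s.
by split; [apply: (LA HM); apply: (LM HM) | apply: (LM HM) | apply: Csmul].
Qed.
Lemma okl_mull s1 s2 : okl M Cs s1 -> okl M Cs s2 -> okl M Cs (mull s1 s2).
Proof.
move=> h1 h2 y /allpairsP [[y1 y2] [/= y1s y2s ->]] /=.
have [a1 b1 c1] := h1 y1 y1s; have [a2 b2 c2] := h2 y2 y2s.
by split; [apply: (LM HM) | apply: (LM HM) | apply: Csmul].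
Qed.
Lemma okl_Dl s : okl M Cs s -> okl M Cs (Dl s).
Proof.
move=> h1 y /allpairsP [[y1 y2] [/= y1s y2s ->]] /=.
have [a1 b1 c1] := h1 y1 y1s; have [a2 b2 c2] := h1 y2 y2s.
by split; [apply: (LB HM); apply: (LM HM) => //; apply: (LD HM) | apply: (LM HM) | apply: Csmul].
Qed.
Lemma okl_oppl s : okl M Cs s -> okl M Cs (oppl s).
Proof. move=> h y /mapP [z zs ->] /=; have [a b c] := h z zs; by split => //; apply: (LN HM). Qed.
Lemma okl_invl s : okl M Cs s -> okl M Cs (invl s).
Proof. move=> h y /mapP [z zs ->] /=; have [a b c] := h z zs; by split. Qed.
Lemma okl_zl s : okl M Cs s -> okl M Cs (zl s).
Proof. move=> h y /mapP [z zs ->] /=; have [a b c] := h z zs; by split => //; apply: (L0 HM). Qed.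

Lemma Pg_addl s1 s2 : okl M Cs s1 -> okl M Cs s2 ->
  Pg g (addl s1 s2) = Pg g s1 * Qg g s2 + Pg g s2 * Qg g s1.
Proof.
move=> h1 h2; rewrite /Pg /Qg big_allpairs_dep /=.
transitivity (\sum_(y1 <- s1) \sum_(y2 <- s2)
   ((g y1.1.1 * y1.2) * (g y2.1.2 * y2.2) + (g y1.1.2 * y1.2) * (g y2.1.1 * y2.2))).
  apply: eq_big_seq => y1 y1s; apply: eq_big_seq => y2 y2s /=.
  have [a1 b1 c1] := h1 y1 y1s; have [a2 b2 c2] := h2 y2 y2s.
  rewrite gadd; try by apply: (LM HM).
  rewrite !gmul //; ring.
by rewrite sum2D !sum2M mulrC [X in _ + X]mulrC.
Qed.
Lemma Qg_addl s1 s2 : okl M Cs s1 -> okl M Cs s2 ->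
  Qg g (addl s1 s2) = Qg g s1 * Qg g s2.
Proof.
move=> h1 h2; rewrite /Qg big_allpairs_dep /= -sum2M.
apply: eq_big_seq => y1 y1s; apply: eq_big_seq => y2 y2s /=.
have [a1 b1 c1] := h1 y1 y1s; have [a2 b2 c2] := h2 y2 y2s.
rewrite gmul //; ring.
Qed.
Lemma Pg_mull s1 s2 : okl M Cs s1 -> okl M Cs s2 ->
  Pg g (mull s1 s2) = Pg g s1 * Pg g s2.
Proof.
move=> h1 h2; rewrite /Pg big_allpairs_dep /= -sum2M.
apply: eq_big_seq => y1 y1s; apply: eq_big_seq => y2 y2s /=.
have [a1 b1 c1] := h1 y1 y1s; have [a2 b2 c2] := h2 y2 y2s.
rewrite gmul //; ring.
Qed.
Lemma Qg_mull s1 s2 : okl M Cs s1 -> okl M Cs s2 ->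
  Qg g (mull s1 s2) = Qg g s1 * Qg g s2.
Proof.
move=> h1 h2; rewrite /Qg big_allpairs_dep /= -sum2M.
apply: eq_big_seq => y1 y1s; apply: eq_big_seq => y2 y2s /=.
have [a1 b1 c1] := h1 y1 y1s; have [a2 b2 c2] := h2 y2 y2s.
rewrite gmul //; ring.
Qed.
Lemma Pg_oppl s : okl M Cs s -> Pg g (oppl s) = - Pg g s.
Proof.
move=> h; rewrite /Pg big_map -sumrN; apply: eq_big_seq => y ys /=.
have [a b c] := h y ys; by rewrite (sgN HM gadd a) mulNr.
Qed.
Lemma Qg_oppl s : Qg g (oppl s) = Qg g s.
Proof. by rewrite /Qg big_map. Qed.
Lemma Qg_Dl s : okl M Cs s -> Qg g (Dl s) = Qg g s * Qg g s.
Proof.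
move=> h1; rewrite /Qg big_allpairs_dep /= -sum2M.
apply: eq_big_seq => y1 y1s; apply: eq_big_seq => y2 y2s /=.
have [a1 b1 c1] := h1 y1 y1s; have [a2 b2 c2] := h1 y2 y2s.
rewrite gmul //; ring.
Qed.

Lemma hv_addl s1 s2 : okl M Cs s1 -> okl M Cs s2 -> Qg g s1 != 0 -> Qg g s2 != 0 ->
  hv g (addl s1 s2) = hv g s1 + hv g s2.
Proof. move=> h1 h2 n1 n2; rewrite /hv Pg_addl // Qg_addl //; field; by rewrite ?n1 ?n2. Qed.
Lemma hv_mull s1 s2 : okl M Cs s1 -> okl M Cs s2 -> Qg g s1 != 0 -> Qg g s2 != 0 ->
  hv g (mull s1 s2) = hv g s1 * hv g s2.
Proof. move=> h1 h2 n1 n2; rewrite /hv Pg_mull // Qg_mull //; field; by rewrite ?n1 ?n2. Qed.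
Lemma hv_oppl s : okl M Cs s -> hv g (oppl s) = - hv g s.
Proof. by move=> h; rewrite /hv Pg_oppl // Qg_oppl mulNr. Qed.

Hypothesis gD : forall x, M x -> g (D x) = D (g x).
Hypothesis CsD : forall x, Cs x -> D x = 0.

Lemma DPg s : okl M Cs s -> D (Pg g s) = \sum_(y <- s) g (D y.1.1) * y.2.
Proof.
move=> h; rewrite /Pg Dsum; last by move=> y ys; have [_ _ c] := h y ys; apply: CsD.
apply: eq_big_seq => y ys; have [a _ _] := h y ys; by rewrite gD.
Qed.
Lemma DQg s : okl M Cs s -> D (Qg g s) = \sum_(y <- s) g (D y.1.2) * y.2.
Proof.
move=> h; rewrite /Qg Dsum; last by move=> y ys; have [_ _ c] := h y ys; apply: CsD.
apply: eq_big_seq => y ys; have [_ a _] := h y ys; by rewrite gD.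
Qed.
Lemma Pg_Dl s : okl M Cs s ->
  Pg g (Dl s) = D (Pg g s) * Qg g s - Pg g s * D (Qg g s).
Proof.
move=> h1; rewrite DPg // DQg // /Pg /Qg big_allpairs_dep /= -!sum2M -sum2B.
apply: eq_big_seq => y1 y1s; apply: eq_big_seq => y2 y2s /=.
have [a1 b1 c1] := h1 y1 y1s; have [a2 b2 c2] := h1 y2 y2s.
rewrite (sgB HM gadd); try by apply: (LM HM) => //; apply: (LD HM).
rewrite !gmul //; try by apply: (LD HM).
ring.
Qed.

Lemma hv_Dl s : okl M Cs s -> Qg g s != 0 -> hv g (Dl s) = D (hv g s).
Proof. by move=> h n; rewrite /hv Pg_Dl // Qg_Dl // DDiv. Qed.

End HomG.

Lemma Pg1 g a b c : Pg g [:: ((a, b), c)] = g a * c.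
Proof. by rewrite /Pg big_cons big_nil addr0. Qed.
Lemma Qg1 g a b c : Qg g [:: ((a, b), c)] = g b * c.
Proof. by rewrite /Qg big_cons big_nil addr0. Qed.

Lemma hv_in (G : A -> Prop) g s : dsubfield D G ->
  (forall y, y \in s -> [/\ G (g y.1.1), G (g y.1.2) & G y.2]) -> G (hv g s).
Proof.
move=> HG h; apply: (LDiv HG); apply: (sum_in HG) => y ys; have [h1 h2 h3] := h y ys;
  by apply: (LM HG).
Qed.

Lemma gen_dsub (E F : A -> Prop) : dsubfield D (gen D E F).
Proof.
split; [|split; [|split; [|split; [|split]]]].
- by move=> G HG _ _; apply: L0.
- by move=> G HG _ _; apply: L1.
- by move=> x y hx hy G HG h1 h2; apply: (LB HG); [apply: hx | apply: hy].
- by move=> x y hx hy G HG h1 h2; apply: (LM HG); [apply: hx | apply: hy].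
- by move=> x hx G HG h1 h2; apply: (LV HG); apply: hx.
- by move=> x hx G HG h1 h2; apply: (LD HG); apply: hx.
Qed.

Lemma gen_l (E F : A -> Prop) x : E x -> gen D E F x.
Proof. by move=> h G _ h1 _; apply: h1. Qed.
Lemma gen_r (E F : A -> Prop) x : F x -> gen D E F x.
Proof. by move=> h G _ _ h1; apply: h1. Qed.
Lemma gen_mono (E E' F F' : A -> Prop) : subset_of E E' -> subset_of F F' ->
  subset_of (gen D E F) (gen D E' F').
Proof. move=> hE hF x hx G HG h1 h2; apply: hx => // y hy; [apply: h1 | apply: h2]; auto. Qed.

Section Rep.
Variables (M Cs : A -> Prop).
Hypothesis HM : dsubfield D M.
Hypothesis Cs1 : Cs 1.
Hypothesis Csmul : forall x y, Cs x -> Cs y -> Cs (x * y).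
Hypothesis CsD : forall x, Cs x -> D x = 0.

Let iadd : forall x y, M x -> M y -> id (x + y) = id x + id y. Proof. by []. Qed.
Let imul : forall x y, M x -> M y -> id (x * y) = id x * id y. Proof. by []. Qed.
Let iD : forall x, M x -> id (D x) = D (id x). Proof. by []. Qed.

Lemma okl1 a b c : M a -> M b -> Cs c -> okl M Cs [:: ((a, b), c)].
Proof. by move=> ha hb hc y; rewrite inE => /eqP ->. Qed.

Lemma M_rep x : M x -> rep M Cs x.
Proof.
move=> hx; exists [:: ((x, 1), 1)]; split; first by apply: okl1 => //; apply: L1.
  by rewrite Qg1 mulr1 oner_neq0.
by rewrite /hv Pg1 Qg1 /= !mulr1 divr1.
Qed.

Lemma Cs_rep c : Cs c -> rep M Cs c.
Proof.
move=> hc; exists [:: ((1, 0), c); ((0, 1), 1)]; split.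
- move=> y; rewrite !inE => /orP [] /eqP -> /=; split => //;
    by [apply: L1 | apply: L0].
- by rewrite /Qg !big_cons big_nil /= mul0r add0r mulr1 addr0 oner_neq0.
- by rewrite /hv /Pg /Qg !big_cons !big_nil /= !(mul0r, mul1r, addr0, add0r, divr1).
Qed.

Lemma rep_dsub : dsubfield D (rep M Cs).
Proof.
split; [|split; [|split; [|split; [|split]]]].
- by apply: M_rep; apply: L0.
- by apply: M_rep; apply: L1.
- move=> x y [s1 [o1 n1 ->]] [s2 [o2 n2 ->]].
  have o2' := okl_oppl HM o2.
  exists (addl s1 (oppl s2)); split.
  + exact: okl_addl.
  + by rewrite (Qg_addl imul o1 o2') Qg_oppl mulf_neq0.
  + rewrite (hv_addl HM iadd imul o1 o2') ?Qg_oppl //.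
    by rewrite (hv_oppl HM iadd o2).
- move=> x y [s1 [o1 n1 ->]] [s2 [o2 n2 ->]].
  exists (mull s1 s2); split.
  + exact: okl_mull.
  + by rewrite (Qg_mull imul o1 o2) mulf_neq0.
  + by rewrite (hv_mull imul o1 o2).
- move=> x [s [o n ->]].
  case: (eqVneq (Pg id s) 0) => hP.
  + exists (zl s); split; first exact: okl_zl.
      by rewrite /Qg big_map.
    rewrite /hv hP mul0r invr0 /Pg big_map big1 ?mul0r //.
    by move=> y _; rewrite mul0r.
  + exists (invl s); split; first exact: okl_invl.
      by rewrite /Qg big_map.
    by rewrite /hv /Pg /Qg !big_map /= invf_div.
- move=> x [s [o n ->]].
  exists (Dl s); split.
  + exact: okl_Dl.
  + by rewrite (Qg_Dl imul o) mulf_neq0.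
  + by rewrite (hv_Dl HM iadd imul iD CsD o).
Qed.

Lemma gen_rep x : gen D M Cs x <-> rep M Cs x.
Proof.
split.
- move=> h; apply: h; [exact: rep_dsub | exact: M_rep | exact: Cs_rep].
- move=> [s [o n ->]] G HG hM hC; apply: hv_in => // y ys.
  by have [h1 h2 h3] := o y ys; split; [apply: hM | apply: hM | apply: hC].
Qed.

End Rep.

Lemma CA1 : CA D 1. Proof. by split => //; apply: D1. Qed.
Lemma CAmul x y : CA D x -> CA D y -> CA D (x * y).
Proof. by move=> [_ hx] [_ hy]; split => //; rewrite DM hx hy mul0r mulr0 addr0. Qed.
Lemma CAD x : CA D x -> D x = 0. Proof. by case. Qed.

Lemma lift (E Cs : A -> Prop) f s :
  (forall y, y \in s -> [/\ Defs.image f E y.1.1, Defs.image f E y.1.2 & Cs y.2]) ->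
  exists s0, okl E Cs s0 /\ map (fun y => ((f y.1.1, f y.1.2), y.2)) s0 = s.
Proof.
elim: s => [|y s IH] h; first by exists [::].
have [[a ha ea] [b hb eb] hc] := h y (mem_head _ _).
have [s0 [o0 e0]] : exists s0, okl E Cs s0 /\ map (fun y => ((f y.1.1, f y.1.2), y.2)) s0 = s.
  by apply: IH => z zs; apply: h; rewrite in_cons zs orbT.
exists (((a, b), y.2) :: s0); split.
- move=> z; rewrite in_cons => /orP [/eqP -> | zs] //; exact: o0.
- by rewrite /= e0 ea eb; case: y {h ea eb hc} => [[]].
Qed.

Lemma hv_eq_iff (M Cs : A -> Prop) g (HM : dsubfield D M)
  (gadd : forall x y, M x -> M y -> g (x + y) = g x + g y)
  (gmul : forall x y, M x -> M y -> g (x * y) = g x * g y) s1 s2 :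
  okl M Cs s1 -> okl M Cs s2 -> Qg g s1 != 0 -> Qg g s2 != 0 ->
  (hv g s1 = hv g s2 <-> Pg g (addl s1 (oppl s2)) = 0).
Proof.
move=> o1 o2 n1 n2.
rewrite (Pg_addl HM gadd gmul o1 (okl_oppl HM o2)) (Pg_oppl HM gadd o2) Qg_oppl.
rewrite /hv; split => [e | e].
- apply/eqP; rewrite mulNr subr_eq0; apply/eqP.
  by move/eqP: e; rewrite eqr_div // => /eqP.
- apply/eqP; rewrite eqr_div //; apply/eqP.
  by move/eqP: e; rewrite mulNr subr_eq0 => /eqP.
Qed.

Section Gal.
Variables (K L U : A -> Prop) (sg : A -> A).
Hypotheses (HK : dsubfield D K) (HL : dsubfield D L) (HU : dsubfield D U).
Hypotheses (KL : subset_of K L) (LU : subset_of L U).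
Hypothesis hs : dhom D K L U sg.
Hypothesis hst : strong D L sg.

Let sadd : forall x y, L x -> L y -> sg (x + y) = sg x + sg y. Proof. by case: hs. Qed.
Let smul : forall x y, L x -> L y -> sg (x * y) = sg x * sg y. Proof. by case: hs => _ []. Qed.
Let s1 : sg 1 = 1. Proof. by case: hs => _ [_ []]. Qed.
Let sD : forall x, L x -> sg (D x) = D (sg x). Proof. by case: hs => _ [_ [_ []]]. Qed.
Let sinj : forall x y, L x -> L y -> sg x = sg y -> x = y. Proof. by case: hs => _ [_ [_ [_ []]]]. Qed.
Let sU : forall x, L x -> U (sg x). Proof. by case: hs => _ [_ [_ [_ [_ []]]]]. Qed.
Let sK : forall x, K x -> sg x = x. Proof. by case: hs => _ [_ [_ [_ [_ []]]]]. Qed.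
Let sfix : forall x, L x -> D x = 0 -> sg x = x.
Proof. by move=> x h1 h2; apply: hst.1. Qed.
Let iadd : forall x y, L x -> L y -> id (x + y) = id x + id y. Proof. by []. Qed.
Let imul : forall x y, L x -> L y -> id (x * y) = id x * id y. Proof. by []. Qed.
Let iD : forall x, L x -> id (D x) = D (id x). Proof. by []. Qed.

Lemma PS s : okl L (CA D) s -> (Pg id s = 0 <-> Pg sg s = 0).
Proof.
move=> o; apply: (Etrans HL sadd smul s1 sD sinj sfix (n := size s) (a := fst)) => //; last exact: D0.
by move=> y ys; have [h1 _ [_ h3]] := o y ys.
Qed.
Lemma QS s : okl L (CA D) s -> (Qg id s = 0 <-> Qg sg s = 0).
Proof.
move=> o; apply: (Etrans HL sadd smul s1 sD sinj sfix (n := size s) (a := snd)) => //; last exact: D0.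
by move=> y ys; have [_ h1 [_ h3]] := o y ys.
Qed.
Lemma QSn s : okl L (CA D) s -> Qg id s != 0 -> Qg sg s != 0.
Proof. by move=> o n; apply/eqP => /(QS o).2; apply/eqP. Qed.
Lemma QSn' s : okl L (CA D) s -> Qg sg s != 0 -> Qg id s != 0.
Proof. by move=> o n; apply/eqP => /(QS o).1; apply/eqP. Qed.

Lemma Wd s1' s2 : okl L (CA D) s1' -> okl L (CA D) s2 -> Qg id s1' != 0 -> Qg id s2 != 0 ->
  (hv id s1' = hv id s2 <-> hv sg s1' = hv sg s2).
Proof.
move=> o1 o2 n1 n2.
have o3 : okl L (CA D) (addl s1' (oppl s2)) by apply: okl_addl => //; [exact: CAmul | exact: okl_oppl].
rewrite (hv_eq_iff HL iadd imul o1 o2 n1 n2).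
rewrite (hv_eq_iff HL sadd smul o1 o2 (QSn o1 n1) (QSn o2 n2)).
exact: PS.
Qed.

Definition chs x := epsilon (inhabits [::])
  (fun s => [/\ okl L (CA D) s, Qg id s != 0 & x = hv id s]).
Definition tau x := hv sg (chs x).

Lemma tau_hv s : okl L (CA D) s -> Qg id s != 0 -> tau (hv id s) = hv sg s.
Proof.
move=> o n.
have [o' n' e'] : [/\ okl L (CA D) (chs (hv id s)), Qg id (chs (hv id s)) != 0 &
   hv id s = hv id (chs (hv id s))].
  by apply: (epsilon_spec (inhabits [::]) (fun s0 => [/\ okl L (CA D) s0, Qg id s0 != 0 & hv id s = hv id s0])); exists s.
by rewrite /tau; apply/(Wd o' o n' n).
Qed.

Lemma repL x : gen D L (CA D) x <-> rep L (CA D) x.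
Proof. apply: gen_rep => //; [exact: CA1 | exact: CAmul | exact: CAD]. Qed.

Lemma img_dsub : dsubfield D (Defs.image sg L).
Proof.
split; [|split; [|split; [|split; [|split]]]].
- by exists 0; [apply: L0 | apply: (sg0 HL sadd)].
- by exists 1; [apply: L1 | apply: s1].
- move=> _ _ [x hx <-] [y hy <-]; exists (x - y); [exact: LB | exact: (sgB HL sadd)].
- move=> _ _ [x hx <-] [y hy <-]; exists (x * y); [exact: LM | exact: smul].
- move=> _ [x hx <-]; exists x^-1; [exact: LV | exact: (sgV HL sadd smul s1 sinj)].
- move=> _ [x hx <-]; exists (D x); [exact: LD | exact: sD].
Qed.

Lemma tau_Gal : Gal D K L tau.
Proof.
split; [split; [|split; [|split; [|split; [|split; [|split]]]]]|].
- move=> x y /repL [sa [oa na ->]] /repL [sb [ob nb ->]].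
  have oab := okl_addl HL CAmul oa ob.
  have nab : Qg id (addl sa sb) != 0 by rewrite (Qg_addl imul oa ob) mulf_neq0.
  rewrite -(hv_addl HL iadd imul oa ob na nb) (tau_hv oab nab) (tau_hv oa na) (tau_hv ob nb).
  by rewrite (hv_addl HL sadd smul oa ob (QSn oa na) (QSn ob nb)).
- move=> x y /repL [sa [oa na ->]] /repL [sb [ob nb ->]].
  have oab := okl_mull HL CAmul oa ob.
  have nab : Qg id (mull sa sb) != 0 by rewrite (Qg_mull imul oa ob) mulf_neq0.
  rewrite -(hv_mull imul oa ob na nb) (tau_hv oab nab) (tau_hv oa na) (tau_hv ob nb).
  by rewrite (hv_mull smul oa ob (QSn oa na) (QSn ob nb)).
- have o1 : okl L (CA D) [:: ((1, 1), 1)] by move=> y; rewrite inE => /eqP -> /=; split; [exact: L1 | exact: L1 | exact: CA1].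
  have e1 : (1 : A) = hv id [:: ((1, 1), 1)] by rewrite /hv Pg1 Qg1 /= mulr1 divr1.
  have n1 : Qg id [:: ((1, 1), 1)] != 0 by rewrite Qg1 mulr1 oner_neq0.
  by rewrite {1}e1 (tau_hv o1 n1) /hv Pg1 Qg1 s1 mulr1 divr1.
- move=> x /repL [sa [oa na ->]].
  have oab := okl_Dl HL CAmul oa.
  have nab : Qg id (Dl sa) != 0 by rewrite (Qg_Dl imul oa) mulf_neq0.
  rewrite -(hv_Dl HL iadd imul iD CAD oa na) (tau_hv oab nab) (tau_hv oa na).
  by rewrite (hv_Dl HL sadd smul sD CAD oa (QSn oa na)).
- move=> x y /repL [sa [oa na ->]] /repL [sb [ob nb ->]].
  by rewrite (tau_hv oa na) (tau_hv ob nb) => /(Wd oa ob na nb).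
- move=> x /repL [sa [oa na ->]]; rewrite (tau_hv oa na).
  apply/hst.2; apply: hv_in; first exact: gen_dsub.
  move=> y ys; have [h1 h2 h3] := oa y ys.
  by split; [apply: gen_l; exists y.1.1 | apply: gen_l; exists y.1.2 | apply: gen_r].
- move=> x hx.
  have [sa [oa na ex]] : rep K (CA D) x.
    by apply/(gen_rep HK CA1 CAmul CAD).
  have oa' : okl L (CA D) sa by move=> y ys; have [h1 h2 h3] := oa y ys; split => //; apply: KL.
  rewrite ex (tau_hv oa' na) /hv /Pg /Qg.
  congr (_ / _); apply: eq_big_seq => y ys; have [h1 h2 _] := oa y ys; by rewrite sK.
- move=> y /hst.2 /(gen_rep img_dsub CA1 CAmul CAD) [s' [o' n' ->]].
  have [s0 [o0 e0]] := lift (fun y ys => let: And3 a b c := o' y ys in And3 a b c).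
  have eP : Pg id s' = Pg sg s0 by rewrite -e0 /Pg big_map.
  have eQ : Qg id s' = Qg sg s0 by rewrite -e0 /Qg big_map.
  have n0 : Qg id s0 != 0 by apply: (QSn' o0); rewrite -eQ.
  exists (hv id s0); first by apply/repL; exists s0.
  by rewrite (tau_hv o0 n0) /hv eP eQ.
Qed.


Lemma f_sum (E : A -> Prop) (f : A -> A) (HE : dsubfield D E)
  (fadd : forall x y, E x -> E y -> f (x + y) = f x + f y) (T : eqType) (s : seq T) (F : T -> A) :
  (forall y, y \in s -> E (F y)) -> f (\sum_(y <- s) F y) = \sum_(y <- s) f (F y).
Proof.
elim: s => [|y s IH] h; first by rewrite !big_nil (sg0 HE fadd).
have hs0 : forall z, z \in s -> E (F z) by move=> z zs; apply: h; rewrite in_cons zs orbT.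
rewrite !big_cons fadd ?IH //; first by apply: h; exact: mem_head.
exact: sum_in.
Qed.

Lemma f_hv (E : A -> Prop) (f : A -> A) (HE : dsubfield D E)
  (fadd : forall x y, E x -> E y -> f (x + y) = f x + f y)
  (fmul : forall x y, E x -> E y -> f (x * y) = f x * f y) (f1 : f 1 = 1)
  (finj : forall x y, E x -> E y -> f x = f y -> x = y) s :
  (forall y, y \in s -> [/\ E y.1.1, E y.1.2 & E y.2]) ->
  f (hv id s) = (\sum_(y <- s) f y.1.1 * f y.2) / (\sum_(y <- s) f y.1.2 * f y.2).
Proof.
move=> h.
have hP : E (Pg id s) by apply: sum_in => // y ys; have [h1 h2 h3] := h y ys; exact: LM.
have hQ : E (Qg id s) by apply: sum_in => // y ys; have [h1 h2 h3] := h y ys; exact: LM.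
rewrite /hv (sgDiv HE fadd fmul f1 finj hP hQ) /Pg /Qg !(f_sum HE fadd).
- congr (_ / _); apply: eq_big_seq => y ys; have [h1 h2 h3] := h y ys; by rewrite fmul.
- by move=> y ys; have [h1 h2 h3] := h y ys; exact: LM.
- by move=> y ys; have [h1 h2 h3] := h y ys; exact: LM.
Qed.

Lemma tau_ext x : L x -> tau x = sg x.
Proof.
move=> hx.
have o1 : okl L (CA D) [:: ((x, 1), 1)] by move=> y; rewrite inE => /eqP -> /=; split; [exact: hx | exact: L1 | exact: CA1].
have n1 : Qg id [:: ((x, 1), 1)] != 0 by rewrite Qg1 mulr1 oner_neq0.
have e1 : x = hv id [:: ((x, 1), 1)] by rewrite /hv Pg1 Qg1 /= !mulr1 divr1.
by rewrite {1}e1 (tau_hv o1 n1) /hv Pg1 Qg1 s1 !mulr1 divr1.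
Qed.

Lemma tau_uniq tau' : Gal D K L tau' -> (forall x, L x -> tau' x = sg x) ->
  forall x, gen D L (CA D) x -> tau' x = tau x.
Proof.
move=> [[tadd [tmul [t1 [tD [tinj [tinto tfix]]]]]] _] he x /repL [s [o n ->]].
rewrite (tau_hv o n) (f_hv (gen_dsub _ _) tadd tmul t1 tinj); last first.
  by move=> y ys; have [h1 h2 h3] := o y ys; split; [apply: gen_l | apply: gen_l | apply: gen_r].
rewrite /hv /Pg /Qg; congr (_ / _); apply: eq_big_seq => y ys; have [h1 h2 h3] := o y ys;
  have gc : gen D K (CA D) y.2 by apply: gen_r.
- by rewrite (he _ h1) (tfix _ gc).
- by rewrite (he _ h2) (tfix _ gc).
Qed.

Let CU := consts D U.
Lemma CU1 : CU 1. Proof. by split; [apply: L1 | apply: D1]. Qed.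
Lemma CUmul x y : CU x -> CU y -> CU (x * y).
Proof. by move=> [h1 hx] [h2 hy]; split; [apply: LM | rewrite DM hx hy mul0r mulr0 addr0]. Qed.
Lemma CUD x : CU x -> D x = 0. Proof. by case. Qed.
Lemma CU_CA x : CU x -> CA D x. Proof. by case. Qed.

Lemma repU (M : A -> Prop) (HM : dsubfield D M) (MU : subset_of M U) u :
  U u -> rep M (CA D) u -> rep M CU u.
Proof.
move=> hu [s [o n e]].
have eS : forall s0 : seq (A * A * A),
    \sum_(y <- s0) (u * y.1.2 - y.1.1) * y.2 = u * Qg id s0 - Pg id s0.
  move=> s0; rewrite /Qg /Pg mulr_sumr -sumrB; apply: eq_bigr => y _ /=; ring.
have hw : \sum_(y <- s) (u * y.1.2 - y.1.1) * y.2 = 0.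
  by rewrite eS e /hv divfK // subrr.
have [s'' [p m sw sv]] := spec HU (n := size s) (s := s) (w := fun t => u * t.2 - t.1) (v := snd)
   erefl (fun y ys => let: And3 h1 h2 h3 := o y ys in
            conj (LB HU (LM HU hu (MU _ h2)) (MU _ h1)) (CAD h3))
   hw n.
exists s''; split => //.
- move=> y ys; have [z zs ez] := tags_sub p ys; have [h1 h2 _] := o z zs.
  by rewrite -ez; split => //; exact: m.
- apply: (mulIf sv); rewrite /hv divfK //; apply/eqP; rewrite -subr_eq0 -eS; exact/eqP.
Qed.

Lemma KEY a : L a -> gen D L CU (sg a).
Proof.
move=> ha; apply/(gen_rep HL CU1 CUmul CUD); apply: (repU HL LU); first exact: sU.
apply/repL; apply/hst.2; apply: gen_l; by exists a.
Qed.

Lemma imgU : subset_of (Defs.image sg L) U. Proof. by move=> _ [x hx <-]; apply: sU. Qed.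

Lemma KEY2 l : L l -> Defs.image tau (gen D L CU) l.
Proof.
move=> hl.
have : rep (Defs.image sg L) CU l.
  apply: (repU img_dsub imgU); first exact: LU.
  apply/(gen_rep img_dsub CA1 CAmul CAD); apply/hst.2; exact: gen_l.
move=> [s' [o' n' ->]].
have [s0 [o0 e0]] := lift (fun y ys => let: And3 a b c := o' y ys in And3 a b c).
have o0' : okl L (CA D) s0 by move=> y ys; have [h1 h2 h3] := o0 y ys; split => //; exact: CU_CA.
have eP : Pg id s' = Pg sg s0 by rewrite -e0 /Pg big_map.
have eQ : Qg id s' = Qg sg s0 by rewrite -e0 /Qg big_map.
have n0 : Qg id s0 != 0 by apply: (QSn' o0'); rewrite -eQ.
exists (hv id s0); first by apply/(gen_rep HL CU1 CUmul CUD); exists s0.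
by rewrite (tau_hv o0' n0) /hv eP eQ.
Qed.

Lemma tau_GalU : GalU D U K L tau.
Proof.
have [[tadd [tmul [t1 [tD [tinj [tinto tfix]]]]]] _] := tau_Gal.
have sL : subset_of (gen D L CU) (gen D L (CA D)) by apply: gen_mono => // x; exact: CU_CA.
have sKs : subset_of (gen D K CU) (gen D K (CA D)) by apply: gen_mono => // x; exact: CU_CA.
split; [split; [|split; [|split; [|split; [|split; [|split]]]]]|].
- by move=> x y hx hy; apply: tadd; apply: sL.
- by move=> x y hx hy; apply: tmul; apply: sL.
- exact: t1.
- by move=> x hx; apply: tD; apply: sL.
- by move=> x y hx hy; apply: tinj; apply: sL.
- move=> x /(gen_rep HL CU1 CUmul CUD) [s [o n ->]].
  have o' : okl L (CA D) s by move=> y ys; have [h1 h2 h3] := o y ys; split => //; exact: CU_CA.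
  rewrite (tau_hv o' n); apply: hv_in; first exact: gen_dsub.
  move=> y ys; have [h1 h2 h3] := o y ys.
  by split; [apply: KEY | apply: KEY | apply: gen_r].
- by move=> x hx; apply: tfix; apply: sKs.
- move=> y /(gen_rep HL CU1 CUmul CUD) [s [o n ->]].
  have [s0 [o0 e0]] : exists s0, okl (gen D L CU) CU s0 /\
      map (fun y => ((tau y.1.1, tau y.1.2), y.2)) s0 = s.
    apply: lift => w ws; have [h1 h2 h3] := o w ws; split => //; exact: KEY2.
  exists (hv id s0).
    apply: hv_in; first exact: gen_dsub.
    by move=> z zs; have [h1 h2 h3] := o0 z zs; split => //; apply: gen_r.
  rewrite (f_hv (gen_dsub L (CA D)) tadd tmul t1 tinj); last first.
    move=> z zs; have [h1 h2 h3] := o0 z zs; split; [exact: sL h1 | exact: sL h2 | exact: (@gen_r L (CA D) _ (CU_CA h3))].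
  rewrite -e0 /hv /Pg /Qg !big_map; congr (_ / _); apply: eq_big_seq => z zs;
    have [h1 h2 h3] := o0 z zs; by rewrite /= (tfix _ (@gen_r K (CA D) _ (CU_CA h3))).
Qed.

End Gal.

Lemma dauto_comp (F E : A -> Prop) f g : dauto D F E f -> dauto D F E g -> dauto D F E (f \o g).
Proof.
move=> [[fa [fm [f1 [fD [fi [fin ff]]]]]] fs] [[ga [gm [g1 [gD [gi [gin gf]]]]]] gs].
split; [split; [|split; [|split; [|split; [|split; [|split]]]]]|] => /=.
- by move=> x y hx hy; rewrite ga // fa //; apply: gin.
- by move=> x y hx hy; rewrite gm // fm //; apply: gin.
- by rewrite g1 f1.
- by move=> x hx; rewrite gD // fD //; apply: gin.
- by move=> x y hx hy h; apply: gi => //; apply: fi => //; apply: gin.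
- by move=> x hx; apply: fin; apply: gin.
- by move=> x hx; rewrite gf // ff.
- move=> y hy; have [x1 hx1 e1] := fs y hy; have [x2 hx2 e2] := gs x1 hx1.
  by exists x2 => //=; rewrite e2.
Qed.

End Main.


Lemma dhom_all (A : fieldType) (D : A -> A) (K L U : A -> Prop) f :
  dhom D K L U f -> dhom D K L (@allA A) f.
Proof. by move=> [a [b [c [d [e [_ g]]]]]]; do 6 (split => //). Qed.

Theorem lemma3p11 (A : fieldType) (D : A -> A) (K L U : A -> Prop) :
  derivation D -> char0 A -> diff_closed D -> saturated D ->
  dsubfield D K -> dsubfield D L -> dsubfield D U ->
  subset_of K L -> subset_of L U ->
  smaller_than_A U ->
  strongly_normal D K L ->
  (* an embedding of the group gal(L/K) into the group Gal(L/K) *)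
  (exists Phi : (A -> A) -> (A -> A),
     [/\ (forall s, gal_small D K L s -> Gal D K L (Phi s)),
         (forall s t, gal_small D K L s -> gal_small D K L t ->
            (forall x, L x -> s x = t x) ->
            forall x, gen D L (CA D) x -> Phi s x = Phi t x),
         (forall s t, gal_small D K L s -> gal_small D K L t ->
            forall x, gen D L (CA D) x -> Phi (s \o t) x = (Phi s \o Phi t) x) &
         (forall s t, gal_small D K L s -> gal_small D K L t ->
            (forall x, gen D L (CA D) x -> Phi s x = Phi t x) ->
            forall x, L x -> s x = t x)]) /\
  (* every sigma in Hom_K(L,U) extends uniquely to Gal(L/K), and the
     extension restricts to an element of Gal_U(L/K) *)
  (forall sigma, dhom D K L U sigma ->
     exists tau,
       [/\ Gal D K L tau, (forall x, L x -> tau x = sigma x),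
           (forall tau', Gal D K L tau' -> (forall x, L x -> tau' x = sigma x) ->
              forall x, gen D L (CA D) x -> tau' x = tau x) &
           GalU D U K L tau]).
Proof.
move=> hD _ _ _ HK HL HU KL LU _ [_ hsn].
have P2 : forall sigma, dhom D K L U sigma ->
     exists tau,
       [/\ Gal D K L tau, (forall x, L x -> tau x = sigma x),
           (forall tau', Gal D K L tau' -> (forall x, L x -> tau' x = sigma x) ->
              forall x, gen D L (CA D) x -> tau' x = tau x) &
           GalU D U K L tau].
  move=> sg hs; have hst := hsn sg (dhom_all hs).
  exists (tau D L sg); split.
  - exact: (tau_Gal hD HK HL KL hs hst).
  - by move=> x hx; apply: (tau_ext hD HL hs hst).
  - by move=> t' g' e' x hx; apply: (tau_uniq hD HL hs hst g' e').
  - exact: (tau_GalU hD HK HL HU KL LU hs hst).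
split => //.
have smallU : forall s, gal_small D K L s -> dhom D K L U s.
  move=> s [[a [b [c [d [e [f g]]]]]] _]; do 5 (split => //); split => //.
  by move=> x hx; apply: LU; apply: f.
pose Phi s := epsilon (inhabits id) (fun t => Gal D K L t /\ forall x, L x -> t x = s x).
have Phis : forall s, gal_small D K L s -> Gal D K L (Phi s) /\ forall x, L x -> Phi s x = s x.
  move=> s hs; apply: (epsilon_spec (inhabits id) (fun t => Gal D K L t /\ forall x, L x -> t x = s x)).
  have [t [h1 h2 _ _]] := P2 s (smallU s hs); by exists t.
exists Phi; split.
- by move=> s hs; case: (Phis s hs).
- move=> s t hs ht e x hx.
  have [t0 [_ _ u _]] := P2 s (smallU s hs).
  have [g1 e1] := Phis s hs; have [g2 e2] := Phis t ht.
  rewrite (u _ g1 e1 x hx) (u _ g2) // => y hy; rewrite e2 // e.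
  by [].
  by [].
- move=> s t hs ht x hx.
  have hst : gal_small D K L (s \o t) by apply: dauto_comp.
  have [t0 [_ _ u _]] := P2 _ (smallU _ hst).
  have [g1 e1] := Phis _ hst; have [g2 e2] := Phis s hs; have [g3 e3] := Phis t ht.
  rewrite (u _ g1 e1 x hx) (u (Phi s \o Phi t)) //.
    exact: dauto_comp.
  move=> y hy /=; rewrite e3 // e2 //.
  by case: ht => [[_ [_ [_ [_ [_ [ti _]]]]]] _]; apply: ti.
- move=> s t hs ht e x hx.
  have [g1 e1] := Phis s hs; have [g2 e2] := Phis t ht.
  by rewrite -e1 // -e2 // e //; apply: gen_l.
Qed.
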